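(* For any two UEC-representatives $\mathcal{U},\mathcal{U}'$ on vertex set $[n]$ there is a finite sequence of UEC-representatives $\mathcal{U}=\mathcal{U}_0,\mathcal{U}_1,\dots,\mathcal{U}_r=\mathcal{U}'$ such that, for each $t$, some monomial representation of $\mathcal{U}_{t+1}$ is obtained from some monomial representation of $\mathcal{U}_t$ by a single within-fiber, out-of-fiber-add, out-of-fiber-delete, merge, or split move.
   Context: For a DAG $\mathcal{D}$, a trek is a path with no repeated vertices and no collider; the unconditional dependence graph $\mathcal{U}^\mathcal{D}$ has an edge between distinct $v,w$ iff there is a trek between them. A UEC-representative on $[n]$ is an undirected graph equal to $\mathcal{U}^\mathcal{D}$ for some DAG $\mathcal{D}$ on $[n]$. A monomial $x_{i_1|A_1}\cdots x_{i_k|A_k}$ (distinct $i_1,\dots,i_k\in[n]$, $A_j\subseteq[n]$, with $i_l\notin A_j$ for all $l,j$, and $\bigcup_j(\{i_j\}\cup A_j)=[n]$) determines the graph on $[n]$ in which distinct $v,w$ are adjacent iff both lie in some $\{i_j\}\cup A_j$; it is a monomial representation of a graph $\mathcal{U}$ if it determines $\mathcal{U}$ (for a UEC-representative, taking $\{i_1,\dots,i_k\}$ any maximum independent set and $A_j=\mathrm{ne}_\mathcal{U}(i_j)$ gives one). Moves on a monomial representation: within-fiber: replace a factor $x_{i|A}x_{j|B}$ by $x_{i|A\cup C}x_{j|B\setminus C}$ where $C\subseteq B\setminus A$; out-of-fiber-add: replace $x_{i_1|A_1}x_{i_2|A_2}$ by $x_{i_1|A_1}x_{i_2|A_2\cup\{c\}}$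 with $c\in A_1\setminus A_2$; out-of-fiber-delete: replace $x_{i_1|A_1}x_{i_2|A_2}$ by $x_{i_1|A_1}x_{i_2|A_2\setminus\{c\}}$ with $c\in A_1\cap A_2$; merge: replace $x_{i_1|A}x_{i_2|A}$ by $x_{i_1|A\cup\{i_2\}}$; split: if $c\in A_1$ and $c\notin A_j$ for all $j\neq1$, replace $x_{i_1|A_1}$ by $x_{i_1|A_1\setminus\{c\}}x_{c|A_1\setminus\{c\}}$. *)

(* Defs.v *)
From mathcomp Require Import all_boot.
Set Implicit Arguments. Unset Strict Implicit. Unset Printing Implicit Defensive.

(* A directed graph on [n] = 'I_n is an edge relation: D x y means x -> y.
   It is acyclic iff no edge x -> y admits a directed path from y back to x
   (in particular there are no self-loops). *)
Definition acyclic (n : nat) (D : rel 'I_n) : Prop :=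
  forall x y, D x y -> ~~ connect D y x.

Definition adjacent (n : nat) (D : rel 'I_n) (x y : 'I_n) : bool :=
  D x y || D y x.

(* no_collider D x y s : along the walk x, y, s_1, s_2, ..., no interior
   vertex (y, s_1, ...) is a collider a -> b <- c. *)
Fixpoint no_collider (n : nat) (D : rel 'I_n) (x y : 'I_n) (s : seq 'I_n)
  : bool :=
  match s with
  | [::] => true
  | z :: s' => ~~ (D x y && D z y) && no_collider D y z s'
  end.

Definition is_trek (n : nat) (D : rel 'I_n) (v : 'I_n) (s : seq 'I_n) : bool :=
  [&& uniq (v :: s), path (adjacent D) v s &
      match s with [::] => true | y :: s' => no_collider D v y s' end].

Definition udg (n : nat) (D : rel 'I_n) (v w : 'I_n) : Prop :=
  v != w /\ exists s, is_trek D v s /\ last v s = w.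

Definition UEC_rep (n : nat) (U : rel 'I_n) : Prop :=
  exists D : rel 'I_n, acyclic D /\ forall v w, U v w <-> udg D v w.

(* A factor x_{i|A} is the pair (i, A); a monomial is a finite list of
   factors, considered up to permutation (commutative product). *)
Definition factor (n : nat) := ('I_n * {set 'I_n})%type.
Definition monomial (n : nat) := seq (factor n).

Definition valid_monomial (n : nat) (m : monomial n) : Prop :=
  [/\ uniq (map fst m),
      (forall f g, f \in m -> g \in m -> f.1 \notin g.2) &
      (forall v : 'I_n, exists2 f, f \in m & v \in f.1 |: f.2)].

Definition mon_graph (n : nat) (m : monomial n) (v w : 'I_n) : bool :=
  (v != w) && has (fun f : factor n => (v \in f.1 |: f.2) && (w \in f.1 |: f.2)) m.

Definition mon_rep (n : nat) (m : monomial n) (U : rel 'I_n) : Prop :=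
  valid_monomial m /\ forall v w, mon_graph m v w = U v w.

Definition within_fiber (n : nat) (m m' : monomial n) : Prop :=
  exists (rest : monomial n) (i j : 'I_n) (A B C : {set 'I_n}),
    [/\ C \subset B :\: A,
        perm_eq m ((i, A) :: (j, B) :: rest) &
        perm_eq m' ((i, A :|: C) :: (j, B :\: C) :: rest)].

Definition out_of_fiber_add (n : nat) (m m' : monomial n) : Prop :=
  exists (rest : monomial n) (i1 i2 c : 'I_n) (A1 A2 : {set 'I_n}),
    [/\ c \in A1 :\: A2,
        perm_eq m ((i1, A1) :: (i2, A2) :: rest) &
        perm_eq m' ((i1, A1) :: (i2, c |: A2) :: rest)].

Definition out_of_fiber_delete (n : nat) (m m' : monomial n) : Prop :=
  exists (rest : monomial n) (i1 i2 c : 'I_n) (A1 A2 : {set 'I_n}),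
    [/\ c \in A1 :&: A2,
        perm_eq m ((i1, A1) :: (i2, A2) :: rest) &
        perm_eq m' ((i1, A1) :: (i2, A2 :\ c) :: rest)].

Definition merge_move (n : nat) (m m' : monomial n) : Prop :=
  exists (rest : monomial n) (i1 i2 : 'I_n) (A : {set 'I_n}),
    perm_eq m ((i1, A) :: (i2, A) :: rest) /\
    perm_eq m' ((i1, A :|: [set i2]) :: rest).

Definition split_move (n : nat) (m m' : monomial n) : Prop :=
  exists (rest : monomial n) (i1 c : 'I_n) (A1 : {set 'I_n}),
    [/\ c \in A1,
        (forall f, f \in rest -> c \notin f.2),
        perm_eq m ((i1, A1) :: rest) &
        perm_eq m' ((i1, A1 :\ c) :: (c, A1 :\ c) :: rest)].

Definition single_move (n : nat) (m m' : monomial n) : Prop :=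
  within_fiber m m' \/ out_of_fiber_add m m' \/ out_of_fiber_delete m m'
  \/ merge_move m m' \/ split_move m m'.

(* Main.v *)
Require Import Defs.
From mathcomp Require Import all_boot.
From Stdlib Require Import FunctionalExtensionality.
From mathcomp Require Import zify.
Set Implicit Arguments. Unset Strict Implicit. Unset Printing Implicit Defensive.

Section Dag.
Variable n : nat.
Variable D : rel 'I_n.
Hypothesis acD : acyclic D.

Lemma path_uniqD a p : path D a p -> uniq (a :: p).
Proof.
elim: p a => [//|b p IH] a /= /andP[Dab pb].
have := IH b pb; rewrite /= => ->; rewrite andbT.
apply/negP=> ain; have := path_connect pb ain.
by rewrite (negbTE (acD Dab)).
Qed.

Lemma no_coll_fwd s y x : path D y s -> no_collider D x y s.
Proof.
elim: s y x => [//|z s IH] y x /= /andP[Dyz pz].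
rewrite IH // andbT; apply/negP => /andP[_ Dzy].
by have := acD Dyz; rewrite (connect1 Dzy).
Qed.

Lemma trek_bwd t v a q : path (fun x y => D y x) v t -> last v t = a -> path D a q ->
  match t ++ q with [::] => true | y :: s => no_collider D v y s end.
Proof.
elim: t v => [|y t IH] v /=.
  move=> _ <-; case: q => [//|y s] /= /andP[_ ps]; exact: no_coll_fwd.
move=> /andP[Dyv pt] lt pq.
have := IH y pt lt pq; case: (t ++ q) => [//|z s] /= ->; rewrite andbT.
apply/negP => /andP[Dvy _].
by have := acD Dyv; rewrite (connect1 Dvy).
Qed.

Lemma last_rev_belast (a : 'I_n) p : last (last a p) (rev (belast a p)) = a.
Proof.
have e : last a p :: rev (belast a p) = rev (a :: p) by rewrite (lastI a p) rev_rcons.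
transitivity (last a (last a p :: rev (belast a p))); first by [].
by rewrite e rev_cons last_rcons.
Qed.

Lemma trek_of a p q : path D a p -> path D a q -> ~~ has (mem q) p ->
  is_trek D (last a p) (rev (belast a p) ++ q).
Proof.
move=> pp pq hq.
have up := path_uniqD pp; have uq := path_uniqD pq.
apply/and3P; split.
- have -> : last a p :: rev (belast a p) ++ q = rev (a :: p) ++ q.
    by rewrite (lastI a p) rev_rcons.
  rewrite cat_uniq rev_uniq up /=; move: uq => /= /andP[aq ->]; rewrite andbT.
  apply/hasPn => x xq; rewrite mem_rev in_cons negb_or; apply/andP; split.
    by apply/eqP => exa; move: aq; rewrite -exa xq.
  by apply/negP => xp; move/hasPn: hq => /(_ x xp) /negP; apply.
- rewrite cat_path last_rev_belast; apply/andP; split.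
    rewrite rev_path; apply: sub_path pp => x y Dxy; by rewrite /adjacent Dxy orbT.
  by apply: sub_path pq => x y Dxy; rewrite /adjacent Dxy.
- apply: (trek_bwd (a := a)) => //; last exact: last_rev_belast.
  by rewrite rev_path.
Qed.

Lemma trek_aux k a p q : size p + size q < k -> path D a p -> path D a q ->
  exists s, is_trek D (last a p) s /\ last (last a p) s = last a q.
Proof.
elim: k a p q => [//|k IH] a p q hk pp pq.
case: (boolP (has (mem q) p)) => [/hasP[b bp bq]|hn].
  move: pp pq hk; case/splitPr: bp => p1 p2; case/splitPr: bq => q1 q2.
  rewrite !cat_path !last_cat /= => /andP[_ /andP[_ pp2]] /andP[_ /andP[_ pq2]] hk.
  apply: IH pp2 pq2; move: hk; rewrite !size_cat /=.
  lia.
exists (rev (belast a p) ++ q); split; first exact: trek_of.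
by rewrite last_cat last_rev_belast.
Qed.

Lemma walk_top s x y : adjacent D x y -> path (adjacent D) y s -> no_collider D x y s ->
  (D x y -> connect D x (last y s)) /\ exists a, connect D a x && connect D a (last y s).
Proof.
elim: s x y => [|z s IH] x y /=.
  move=> axy _ _; split; first exact: connect1.
  case/orP: axy => [Dxy|Dyx]; first by exists x; rewrite connect0 connect1.
  by exists y; rewrite connect0 connect1.
move=> axy /andP[ayz ps] /andP[nc ncs].
have [IH1 [a /andP[ay al]]] := IH y z ayz ps ncs.
have fwd : D x y -> connect D x (last z s).
  move=> Dxy; have Dyz : D y z.
    by case/orP: ayz => // Dzy; move: nc; rewrite Dxy Dzy.
  exact: connect_trans (connect1 Dxy) (IH1 Dyz).
split=> //.
case: (boolP (D x y)) => [Dxy|nDxy].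
  by exists x; rewrite connect0 fwd.
have Dyx : D y x by move: axy; rewrite /adjacent (negbTE nDxy).
by exists a; rewrite al andbT (connect_trans ay (connect1 Dyx)).
Qed.

Lemma udg_anc v w : udg D v w <-> (v != w /\ exists a, connect D a v && connect D a w).
Proof.
split.
  case=> vw [s [/and3P[_ ps nc] ls]]; split=> //.
  case: s ps nc ls => [_ _ /= e|y s] /=; first by move: vw; rewrite e eqxx.
  move=> /andP[avy ps] nc ls.
  have [_ [a h]] := walk_top avy ps nc; exists a; by rewrite -ls.
case=> vw [a /andP[ca cb]]; split=> //.
move: ca cb => /connectP[p pp ->] /connectP[q pq ->].
exact: (trek_aux (ltnSn _) pp pq).
Qed.

Lemma connect_in x y : connect D x y -> x != y -> exists u, D u y.
Proof.
case/connectP=> p; case/lastP: p => [_ -> /=|p z]; first by rewrite eqxx.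
rewrite rcons_path last_rcons => /andP[_ h] ->; by exists (last x p).
Qed.

Lemma source_exists v : exists2 s, [forall u, ~~ D u s] & connect D s v.
Proof.
have [k] := ubnP #|[set u | connect D u v]|.
elim: k v => [//|k IH] v hk.
case: (boolP [forall u, ~~ D u v]) => [h|]; first by exists v.
rewrite negb_forall => /existsP[u]; rewrite negbK => Duv.
have [|s hs su] := IH u; last by exists s => //; apply: connect_trans su (connect1 Duv).
apply: (leq_trans _ (ltnSE hk)); apply: proper_card; apply/properP; split.
  by apply/subsetP => x; rewrite !inE => xu; apply: connect_trans xu (connect1 Duv).
by exists v; rewrite !inE ?connect0 // (negbTE (acD Duv)).
Qed.

End Dag.

Section Mon.
Variable n : nat.
Implicit Types (m : monomial n) (D : rel 'I_n).

Lemma validE m : valid_monomial m <->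
  [/\ uniq (map fst m), (forall x g, x \in map fst m -> g \in m -> x \notin g.2) &
      (forall v : 'I_n, exists2 f, f \in m & v \in f.1 |: f.2)].
Proof.
split; case=> h1 h2 h3; split=> //.
  by move=> x g /mapP[f fm ->] gm; exact: h2.
by move=> f g fm gm; apply: h2 => //; exact: map_f.
Qed.

Lemma root_inj m f g : uniq (map fst m) -> f \in m -> g \in m -> f.1 = g.1 -> f = g.
Proof.
elim: m => [//|h m IH] /= /andP[hn um]; rewrite !in_cons.
case/orP=> [/eqP->|fm]; case/orP=> [/eqP->|gm] //.
- by move=> e; move: hn; rewrite e map_f.
- by move=> e; move: hn; rewrite -e map_f.
- exact: IH.
Qed.

Lemma map_fst_pair (l : seq 'I_n) (F : 'I_n -> {set 'I_n}) :
  map fst [seq (s, F s) | s <- l] = l.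
Proof. by elim: l => //= x l ->. Qed.

Definition srcs D := [seq s <- enum 'I_n | [forall u, ~~ D u s]].
Definition mon_of D : monomial n :=
  [seq (s, [set v | connect D s v] :\ s) | s <- srcs D].

Lemma memA D s v : (v \in s |: ([set u | connect D s u] :\ s)) = connect D s v.
Proof. by rewrite !inE; case: eqP => [->|]; rewrite ?connect0. Qed.

Lemma mon_of_valid D : acyclic D -> valid_monomial (mon_of D).
Proof.
move=> acD; apply/validE; split.
- by rewrite map_fst_pair filter_uniq // enum_uniq.
- move=> x g; rewrite map_fst_pair => xs /mapP[s' _ ->] /=.
  rewrite !inE negb_and negbK; case: eqP => //= /eqP xs'.
  apply/negP => c; have sx : s' != x by rewrite eq_sym.
  have [u Dux] := connect_in c sx.
  by move: xs; rewrite mem_filter => /andP[/forallP/(_ u)]; rewrite Dux.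
- move=> v; have [s hs sv] := source_exists acD v.
  exists (s, [set u | connect D s u] :\ s); last by rewrite memA.
  by apply: map_f; rewrite mem_filter hs mem_enum.
Qed.

Lemma mon_of_graph D v w : acyclic D ->
  mon_graph (mon_of D) v w = (v != w) && [exists a, connect D a v && connect D a w].
Proof.
move=> acD; rewrite /mon_graph has_map; congr (_ && _).
apply/hasP/existsP => [[s _]|[a /andP[av aw]]].
  by rewrite /preim /= !memA => h; exists s.
have [s hs sa] := source_exists acD a.
exists s; first by rewrite mem_filter hs mem_enum.
by rewrite /preim /= !memA (connect_trans sa av) (connect_trans sa aw).
Qed.

Lemma UEC_mon (U : rel 'I_n) : UEC_rep U ->
  exists2 m, valid_monomial m & forall v w, mon_graph m v w = U v w.
Proof.
case=> D [acD hU]; exists (mon_of D); first exact: mon_of_valid.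
move=> v w; rewrite mon_of_graph //.
apply/idP/idP.
  case/andP=> vw /existsP[a h]; apply/hU; apply/(udg_anc acD); split=> //; by exists a.
move/hU/(udg_anc acD) => [vw [a h]]; rewrite vw /=; apply/existsP; by exists a.
Qed.

Definition Dm m : rel 'I_n := fun x y => has (fun f : factor n => (f.1 == x) && (y \in f.2)) m.

Lemma Dm_root m x y : Dm m x y -> x \in map fst m.
Proof. by case/hasP=> f fm /andP[/eqP <- _]; exact: map_f. Qed.

Lemma Dm_nonroot m x y : valid_monomial m -> Dm m x y -> y \notin map fst m.
Proof.
move/validE=> [_ h2 _] /hasP[f fm /andP[_ yf]].
by apply/negP => yr; move: (h2 y f yr fm); rewrite yf.
Qed.

Lemma Dm_connect m a v : valid_monomial m -> connect (Dm m) a v -> a = v \/ Dm m a v.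
Proof.
move=> vm /connectP[[|b [|c p]] /=]; first by move=> _ ->; left.
  by rewrite andbT => h ->; right.
case/and3P=> Dab Dbc _ _.
by move: (Dm_nonroot vm Dab); rewrite (Dm_root Dbc).
Qed.

Lemma Dm_acyclic m : valid_monomial m -> acyclic (Dm m).
Proof.
move=> vm x y Dxy; apply/negP => /(Dm_connect vm) [e|Dyx].
  by move: (Dm_nonroot vm Dxy); rewrite e (Dm_root Dxy).
by move: (Dm_nonroot vm Dxy); rewrite (Dm_root Dyx).
Qed.

Lemma valid_UEC m : valid_monomial m -> UEC_rep (mon_graph m).
Proof.
move=> vm; exists (Dm m); split; first exact: Dm_acyclic.
move=> v w; rewrite (udg_anc (Dm_acyclic vm)); split.
  case/andP=> vw /hasP[f fm /andP[vf wf]]; split=> //; exists f.1.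
  have h : forall z, z \in f.1 |: f.2 -> connect (Dm m) f.1 z.
    move=> z; rewrite in_setU1 => /orP[/eqP->|zf]; first exact: connect0.
    by apply: connect1; apply/hasP; exists f => //; rewrite eqxx.
  by rewrite !h.
case=> vw [a /andP[/(Dm_connect vm) av /(Dm_connect vm) aw]]; rewrite /mon_graph vw /=.
move/validE: vm => [um _ _].
case: av => [ev|/hasP[f fm /andP[/eqP fa vf]]]; case: aw => [ew|/hasP[g gm /andP[/eqP ga wg]]].
- by move: vw; rewrite -ev -ew eqxx.
- apply/hasP; exists g => //; by rewrite ga -ev setU11 in_setU1 wg orbT.
- apply/hasP; exists f => //; by rewrite fa -ew setU11 in_setU1 vf orbT.
- have efg := root_inj um fm gm (etrans fa (esym ga)); subst g.
  apply/hasP; exists f => //; by rewrite !in_setU1 vf wg !orbT.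
Qed.

End Mon.

Section Moves.
Variable n : nat.
Implicit Types (m : monomial n).

Lemma relext (U V : rel 'I_n) : (forall v w, U v w = V v w) -> U = V.
Proof.
move=> h; apply: functional_extensionality => v; apply: functional_extensionality => w.
exact: h.
Qed.

Definition GStep (U V : rel 'I_n) := exists m m', [/\ valid_monomial m, valid_monomial m',
  U = mon_graph m, V = mon_graph m' & single_move m m'].

Inductive chain : rel 'I_n -> rel 'I_n -> Prop :=
| ch_refl U : chain U U
| ch_step U V W : GStep U V -> chain V W -> chain U W.

Lemma chain_trans U V W : chain U V -> chain V W -> chain U W.
Proof. elim=> // U1 V1 W1 s _ IH /IH; exact: ch_step. Qed.

Definition Bi U V := chain U V /\ chain V U.

Lemma Bi_trans U V W : Bi U V -> Bi V W -> Bi U W.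
Proof. by case=> h1 h2 [h3 h4]; split; apply: chain_trans; eassumption. Qed.

Lemma Bi_sym U V : Bi U V -> Bi V U.
Proof. by case. Qed.

Lemma Bi_step U V : GStep U V -> GStep V U -> Bi U V.
Proof. by move=> h1 h2; split; apply: ch_step; eassumption || exact: ch_refl. Qed.

Lemma valid_perm m m' : perm_eq m m' -> valid_monomial m -> valid_monomial m'.
Proof.
move=> pm /validE[h1 h2 h3]; apply/validE; split.
- by rewrite -(perm_uniq (perm_map fst pm)).
- by move=> x g; rewrite -(perm_mem (perm_map fst pm)) -(perm_mem pm); exact: h2.
- by move=> v; have [f fm vf] := h3 v; exists f => //; rewrite -(perm_mem pm).
Qed.

Lemma perm_swap2 (f1 f2 : factor n) rest : perm_eq (f1 :: f2 :: rest) (f2 :: f1 :: rest).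
Proof. exact: (permEl (perm_catCA [:: f1] [:: f2] rest)). Qed.

Lemma graph_swap (f1 f2 : factor n) rest :
  mon_graph (f1 :: f2 :: rest) = mon_graph (f2 :: f1 :: rest).
Proof. by apply: relext => v w; rewrite /mon_graph /= orbCA. Qed.

Lemma valid_sup rest i1 i2 (A1 A2 B : {set 'I_n}) :
  valid_monomial ((i1, A1) :: (i2, A2) :: rest) -> A2 \subset B -> B \subset A1 :|: A2 ->
  valid_monomial ((i1, A1) :: (i2, B) :: rest).
Proof.
move=> /validE[h1 h2 h3] sB Bs; apply/validE; split => //.
- move=> x g xr; rewrite !in_cons => /orP[/eqP->|/orP[/eqP->|gr]] /=.
  + by apply: (h2 x (i1, A1) xr); rewrite in_cons eqxx.
  + apply/negP => xB; move/subsetP: Bs => /(_ x xB); rewrite in_setU => /orP[] xA.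
      by move: (h2 x (i1, A1) xr); rewrite in_cons eqxx xA => /(_ isT).
    by move: (h2 x (i2, A2) xr); rewrite !in_cons eqxx orbT xA => /(_ isT).
  + by apply: (h2 x g xr); rewrite !in_cons gr !orbT.
- move=> v; have [f fm vf] := h3 v; move: fm; rewrite !in_cons => /orP[/eqP ef|/orP[/eqP ef|fr]].
  + by exists f; rewrite // ef in_cons eqxx.
  + exists (i2, B); first by rewrite !in_cons eqxx orbT.
    move: vf; rewrite ef /= !in_setU1 => /orP[->//|vA]; by rewrite (subsetP sB v vA) orbT.
  + by exists f; rewrite // !in_cons fr !orbT.
Qed.

Lemma valid_merge rest i1 i2 (A : {set 'I_n}) :
  valid_monomial ((i1, A) :: (i2, A) :: rest) ->
  valid_monomial ((i1, A :|: [set i2]) :: rest).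
Proof.
move=> /validE[h1 h2 h3]; move: h1 => /= /andP[]; rewrite in_cons negb_or => /andP[i12 i1r] /andP[i2r ur].
apply/validE; split.
- by rewrite /= i1r.
- move=> x g /= xr; rewrite in_cons => /orP[/eqP->|gr] /=.
  + rewrite in_setU negb_or; apply/andP; split.
      by apply: (h2 x (i1, A)); rewrite ?in_cons ?eqxx //; move: xr; rewrite !in_cons => /orP[->|->]; rewrite ?orbT.
    by rewrite in_set1; apply/negP=> /eqP e; move: xr; rewrite e in_cons (negbTE i2r) orbF eq_sym (negbTE i12).
  + by apply: (h2 x g); rewrite ?in_cons ?gr ?orbT //; move: xr; rewrite !in_cons => /orP[->|->]; rewrite ?orbT.
- move=> v; have [f fm vf] := h3 v; move: fm; rewrite !in_cons => /orP[/eqP ef|/orP[/eqP ef|fr]].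
  + exists (i1, A :|: [set i2]); first by rewrite in_cons eqxx.
    by move: vf; rewrite ef /= !in_setU1 in_setU => /orP[->|->]; rewrite ?orbT.
  + exists (i1, A :|: [set i2]); first by rewrite in_cons eqxx.
    by move: vf; rewrite ef /= !in_setU1 in_setU in_set1 => /orP[->|->]; rewrite ?orbT.
  + by exists f; rewrite // in_cons fr orbT.
Qed.
End Moves.

Section Red.
Variable n : nat.
Implicit Types (m : monomial n).

Lemma step_add rest i1 i2 (A1 A2 : {set 'I_n}) c :
  valid_monomial ((i1, A1) :: (i2, A2) :: rest) -> c \in A1 :\: A2 ->
  Bi (mon_graph ((i1, A1) :: (i2, A2) :: rest)) (mon_graph ((i1, A1) :: (i2, c |: A2) :: rest)).
Proof.
move=> vm cA; have := cA; rewrite in_setD => /andP[cA2 cA1].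
have vm' : valid_monomial ((i1, A1) :: (i2, c |: A2) :: rest).
  apply: valid_sup vm _ _; first exact: subsetUr.
  by apply/subsetP => x; rewrite !inE => /orP[/eqP->|->]; rewrite ?cA1 ?orbT.
apply: Bi_step.
  exists ((i1, A1) :: (i2, A2) :: rest), ((i1, A1) :: (i2, c |: A2) :: rest); split=> //.
  right; left; exists rest, i1, i2, c, A1, A2; split=> //.
exists ((i1, A1) :: (i2, c |: A2) :: rest), ((i1, A1) :: (i2, A2) :: rest); split=> //.
right; right; left; exists rest, i1, i2, c, A1, (c |: A2); split=> //.
  by rewrite in_setI cA1 setU11.
by rewrite setU1K.
Qed.

Lemma step_merge rest i1 i2 (A : {set 'I_n}) :
  valid_monomial ((i1, A) :: (i2, A) :: rest) ->
  Bi (mon_graph ((i1, A) :: (i2, A) :: rest)) (mon_graph ((i1, A :|: [set i2]) :: rest)).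
Proof.
move=> vm; have vm' := valid_merge vm.
have [_ h2 _] := (validE _).1 vm.
have i2r : i2 \in map fst ((i1, A) :: (i2, A) :: rest) by rewrite !in_cons eqxx orbT.
apply: Bi_step.
  exists ((i1, A) :: (i2, A) :: rest), ((i1, A :|: [set i2]) :: rest); split=> //.
  right; right; right; left; exists rest, i1, i2, A; split=> //.
exists ((i1, A :|: [set i2]) :: rest), ((i1, A) :: (i2, A) :: rest); split=> //.
right; right; right; right; exists rest, i1, i2, (A :|: [set i2]); split=> //.
- by rewrite in_setU in_set1 eqxx orbT.
- by move=> f fr; apply: h2 i2r _; rewrite !in_cons fr !orbT.
- have i2A : i2 \notin A by apply: (h2 _ (i1, A) i2r); rewrite in_cons eqxx.
  by rewrite setUC setU1K.
Qed.

Lemma add_chain rest i1 i2 (A1 : {set 'I_n}) A2 :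
  valid_monomial ((i1, A1) :: (i2, A2) :: rest) ->
  Bi (mon_graph ((i1, A1) :: (i2, A2) :: rest)) (mon_graph ((i1, A1) :: (i2, A1 :|: A2) :: rest)).
Proof.
have [k] := ubnP #|A1 :\: A2|; elim: k A2 => [//|k IH] A2 hk vm.
case: (set_0Vmem (A1 :\: A2)) => [e|[c cin]].
  have /setUidPr -> : A1 \subset A2 by rewrite -setD_eq0 e.
  by split; exact: ch_refl.
have := cin; rewrite in_setD => /andP[cA2 cA1].
have vm' : valid_monomial ((i1, A1) :: (i2, c |: A2) :: rest).
  apply: valid_sup vm _ _; first exact: subsetUr.
  by apply/subsetP => x; rewrite !inE => /orP[/eqP->|->]; rewrite ?cA1 ?orbT.
apply: Bi_trans (step_add vm cin) _.
have -> : A1 :|: A2 = A1 :|: (c |: A2).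
  by rewrite setUA; congr (_ :|: _); apply/esym/setUidPl; rewrite sub1set.
apply: IH vm'; apply: (leq_trans _ (ltnSE hk)); apply: proper_card; apply/properP; split.
  by apply: setDS; exact: subsetUr.
by exists c => //; rewrite in_setD setU11.
Qed.

Definition Kn : rel 'I_n := fun v w => v != w.

Lemma reduce k m : size m < k -> valid_monomial m -> Bi (mon_graph m) Kn.
Proof.
elim: k m => [//|k IH] [|[i1 A1] [|[i2 A2] rest]] hk vm.
- have -> : mon_graph [::] = Kn.
    apply: relext => v w; have [_ _ h3] := (validE _).1 vm; by have [] := h3 v.
  by split; exact: ch_refl.
- have -> : mon_graph [:: (i1, A1)] = Kn.
    apply: relext => v w; have [_ _ h3] := (validE _).1 vm.
    have [f1 + v1] := h3 v; rewrite in_cons orbF => /eqP ef; rewrite ef in v1.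
    have [g1 + w1] := h3 w; rewrite in_cons orbF => /eqP eg; rewrite eg in w1.
    rewrite /mon_graph /= v1 w1 ?andbT ?orbF; by [] || (rewrite /Kn; case: (v != w)).
  by split; exact: ch_refl.
- have v1 := valid_sup vm (subsetUr A1 A2) (subxx _).
  apply: Bi_trans (add_chain vm) _.
  rewrite graph_swap.
  have v2 := valid_perm (perm_swap2 _ _ _) v1.
  apply: Bi_trans (add_chain v2) _.
  have e : (A1 :|: A2) :|: A1 = A1 :|: A2 by apply/setUidPl; exact: subsetUl.
  rewrite e; have v3 := valid_sup v2 (subsetUl A1 A2) (subsetUl _ _).
  apply: Bi_trans (step_merge v3) _.
  apply: IH (valid_merge v3); move: hk => /=; lia.
Qed.

End Red.

Lemma chain_seq n (U V : rel 'I_n) : chain U V -> UEC_rep U ->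
  exists (r : nat) (G : nat -> rel 'I_n),
    [/\ G 0 = U, G r = V,
        (forall t, t <= r -> UEC_rep (G t)) &
        (forall t, t < r ->
           exists m m' : monomial n,
             [/\ mon_rep m (G t), mon_rep m' (G t.+1) & single_move m m'])].
Proof.
elim=> [W|U1 V1 W1 [m [m' [vm vm' e1 e2 sm]]] _ IH] hU.
  exists 0, (fun _ => W); split=> // t; by rewrite ?ltn0.
have [r [G [G0 Gr GU Gs]]] := IH (eq_ind_r _ (valid_UEC vm') e2).
exists r.+1, (fun t => if t is t'.+1 then G t' else U1); split=> //.
  by case=> [//|t] /= /GU.
case=> [_|t] /=.
  exists m, m'; split=> //; split=> //; by move=> v w; rewrite ?e1 ?G0 ?e2.
exact: Gs.
Qed.

Theorem theorem4p6 (n : nat) (U U' : rel 'I_n) :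
  UEC_rep U -> UEC_rep U' ->
  exists (r : nat) (G : nat -> rel 'I_n),
    [/\ G 0 = U, G r = U',
        (forall t, t <= r -> UEC_rep (G t)) &
        (forall t, t < r ->
           exists m m' : monomial n,
             [/\ mon_rep m (G t), mon_rep m' (G t.+1) & single_move m m'])].
Proof.
move=> hU hU'.
have [m vm em] := UEC_mon hU; have [m' vm' em'] := UEC_mon hU'.
apply: chain_seq hU.
have -> : U = mon_graph m by apply: relext => v w; rewrite em.
have -> : U' = mon_graph m' by apply: relext => v w; rewrite em'.
apply: chain_trans (proj1 (reduce (ltnSn _) vm)) (proj2 (reduce (ltnSn _) vm')).
Qed.
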